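(* Let $T:l_\infty\to l_\infty$ be a continuous positive linear map with adjoint $T^*$. Suppose (i) for every sequence $(A_n)$ of subsets of $\mathbb N$ with $(A_n)\downarrow\emptyset$, $T(\mathbb I_{A_n})$ converges to $0$ coordinatewise; and (ii) for every $n\in\mathbb N$ there is a finite set $E_n\subseteq\mathbb N$ containing the support of $T(\mathbb I_{\{n\}})$. Then $T^*$ is a Yosida–Hewitt transformation, i.e. $T^*(\mu)\in ca(\mathbb N)$ for every $\mu\in ca(\mathbb N)$ and $T^*(\mu)\in pa(\mathbb N)$ for every $\mu\in pa(\mathbb N)$.
   Context: $l_\infty$: real bounded sequences indexed by $\mathbb N$. $\mathbb I_A$ is the indicator sequence of $A\subseteq\mathbb N$. $(A_n)\downarrow\emptyset$ means $A_n\supseteq A_{n+1}$ and $\bigcap_nA_n=\emptyset$. $ba(\mathbb N)$: norm dual of $l_\infty$ (bounded finitely additive signed measures on $2^{\mathbb N}$), pairing $\langle x,\mu\rangle$. The adjoint $T^*$ satisfies $\langle x,T^*(\mu)\rangle=\langle T(x),\mu\rangle$. $ca(\mathbb N)$ is the set of countably additive elements of $ba(\mathbb N)$; $pa(\mathbb N)$ is the set of purely finitely additive elements, i.e. $\mu$ with $\mu(\{n\})=0$ for every $n\in\mathbb N$. *)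

(* Defs.v *)
From Stdlib Require Export Reals List.
Open Scope R_scope.

(* Real sequences indexed by N; l_infty = the bounded ones. *)
Definition seqR := nat -> R.
Definition bounded (x : seqR) : Prop := exists M, forall n, Rabs (x n) <= M.

Definition subset_N := nat -> bool.
Definition indic (A : subset_N) : seqR := fun n => if A n then 1 else 0.
Definition singleton (k : nat) : subset_N := fun m => Nat.eqb m k.

Definition linf_continuous (T : seqR -> seqR) : Prop :=
  forall x, bounded x -> forall eps, 0 < eps -> exists delta, 0 < delta /\
    forall y, bounded y -> (forall n, Rabs (x n - y n) <= delta) ->
      forall n, Rabs (T x n - T y n) <= eps.

Definition linf_linear (T : seqR -> seqR) : Prop :=
  forall x y a b, bounded x -> bounded y ->
    forall n, T (fun k => a * x k + b * y k) n = a * T x n + b * T y n.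

Definition linf_positive (T : seqR -> seqR) : Prop :=
  forall x, bounded x -> (forall n, 0 <= x n) -> forall n, 0 <= T x n.

Definition cont_pos_linear_op (T : seqR -> seqR) : Prop :=
  (forall x, bounded x -> bounded (T x)) /\ linf_linear T /\
  linf_continuous T /\ linf_positive T.

Definition linf_dual (phi : seqR -> R) : Prop :=
  (forall x y a b, bounded x -> bounded y ->
     phi (fun k => a * x k + b * y k) = a * phi x + b * phi y) /\
  (forall x, bounded x -> forall eps, 0 < eps -> exists delta, 0 < delta /\
     forall y, bounded y -> (forall n, Rabs (x n - y n) <= delta) ->
       Rabs (phi x - phi y) <= eps).

(* The identification l_infty^* = ba(N): phi corresponds to the bounded finitely
   additive measure A |-> <I_A, phi> = phi (I_A). *)
Definition ba_of (phi : seqR -> R) : subset_N -> R := fun A => phi (indic A).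

Definition adjoint (T : seqR -> seqR) (phi : seqR -> R) : seqR -> R :=
  fun x => phi (T x).

Definition is_ca (mu : subset_N -> R) : Prop :=
  forall (A : nat -> subset_N) (B : subset_N),
    (forall i j n, i <> j -> A i n = true -> A j n = false) ->
    (forall n, B n = true <-> exists k, A k n = true) ->
    infinite_sum (fun k => mu (A k)) (mu B).

Definition is_pa (mu : subset_N -> R) : Prop :=
  forall n, mu (singleton n) = 0.

Definition yosida_hewitt (S : (seqR -> R) -> (seqR -> R)) : Prop :=
  (forall phi, linf_dual phi -> is_ca (ba_of phi) -> is_ca (ba_of (S phi))) /\
  (forall phi, linf_dual phi -> is_pa (ba_of phi) -> is_pa (ba_of (S phi))).

Definition decr_to_empty (A : nat -> subset_N) : Prop :=
  (forall n m, A (S n) m = true -> A n m = true) /\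
  (forall m, exists n, A n m = false).

(* Main.v *)
Require Import Defs.
From Stdlib Require Import Reals List Lra Lia FunctionalExtensionality Bool.
Open Scope R_scope. Open Scope bool_scope.
Require Import Defs.

Section Phi.
Variable phi : seqR -> R.
Hypothesis Hphi : linf_dual phi.

Lemma phi_ext (x y : seqR) : (forall k, x k = y k) -> phi x = phi y.
Proof. intros H; f_equal; apply functional_extensionality; auto. Qed.

Lemma phi_add (x y : seqR) : bounded x -> bounded y -> phi (fun k => x k + y k) = phi x + phi y.
Proof.
  intros bx by_. destruct Hphi as [L _].
  transitivity (phi (fun k => 1 * x k + 1 * y k)).
  - apply phi_ext; intros; ring.
  - rewrite (L x y 1 1 bx by_); ring.
Qed.

Lemma phi_scal (x : seqR) (a : R) : bounded x -> phi (fun k => a * x k) = a * phi x.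
Proof.
  intros bx. destruct Hphi as [L _].
  transitivity (phi (fun k => a * x k + 0 * x k)).
  - apply phi_ext; intros; ring.
  - rewrite (L x x a 0 bx bx); ring.
Qed.
End Phi.

Lemma bounded_indic A : bounded (indic A).
Proof. exists 1; intros n; unfold indic; destruct (A n); rewrite ?Rabs_R1, ?Rabs_R0; lra. Qed.

Lemma bounded_add (x y : seqR) : bounded x -> bounded y -> bounded (fun k => x k + y k).
Proof. intros [M1 H1] [M2 H2]; exists (M1+M2); intros n.
  eapply Rle_trans; [apply Rabs_triang|]. specialize (H1 n); specialize (H2 n); lra. Qed.

Lemma bounded_scal (x : seqR) (a : R) : bounded x -> bounded (fun k => a * x k).
Proof. intros [M H]; exists (Rabs a * M); intros n; rewrite Rabs_mult.
  apply Rmult_le_compat_l; auto using Rabs_pos. Qed.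

Section Top.
Variable T : seqR -> seqR.
Hypothesis HT : linf_linear T.

Lemma T_add (x y : seqR) : bounded x -> bounded y -> T (fun k => x k + y k) = fun n => T x n + T y n.
Proof.
  intros bx by_. apply functional_extensionality; intros n.
  replace (T x n + T y n) with (1 * T x n + 1 * T y n) by ring.
  rewrite <- (HT x y 1 1 bx by_). f_equal. apply functional_extensionality; intros; ring.
Qed.

Lemma T_sub (x y : seqR) : bounded x -> bounded y -> T (fun k => x k - y k) = fun n => T x n - T y n.
Proof.
  intros bx by_. apply functional_extensionality; intros n.
  replace (T x n - T y n) with (1 * T x n + (-1) * T y n) by ring.
  rewrite <- (HT x y 1 (-1) bx by_). f_equal. apply functional_extensionality; intros; ring.
Qed.
End Top.

Lemma Rlim_nonneg (s : nat -> R) (l : R) : infinite_sum s l -> (forall k, 0 <= s k) -> 0 <= l.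
Proof.
  intros H Hs. destruct (Rle_lt_dec 0 l) as [|Hl]; auto.
  destruct (H (- l)) as [N HN]; [lra|].
  specialize (HN N (le_n N)). unfold R_dist in HN.
  assert (0 <= sum_f_R0 s N).
  { clear HN; induction N; simpl; auto. specialize (Hs (S N)); lra. }
  apply Rabs_def2 in HN. destruct HN; lra.
Qed.

Lemma Rlim_nonpos (s : nat -> R) (l : R) : infinite_sum s l -> (forall k, s k <= 0) -> l <= 0.
Proof.
  intros H Hs. destruct (Rle_lt_dec l 0) as [|Hl]; auto.
  destruct (H l) as [N HN]; [lra|].
  specialize (HN N (le_n N)). unfold R_dist in HN.
  assert (sum_f_R0 s N <= 0).
  { clear HN; induction N; simpl; auto. specialize (Hs (S N)); lra. }
  apply Rabs_def2 in HN. destruct HN; lra.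
Qed.

Definition additive (nu : subset_N -> R) : Prop :=
  forall D1 D2 : subset_N, (forall n, D1 n = true -> D2 n = false) ->
    nu (fun n => D1 n || D2 n) = nu D1 + nu D2.

Lemma set_ext (nu : subset_N -> R) (A B : subset_N) : (forall n, A n = B n) -> nu A = nu B.
Proof. intros H; f_equal; apply functional_extensionality; auto. Qed.

Fixpoint Crem (A : nat -> subset_N) (B : subset_N) (N : nat) : subset_N :=
  match N with O => B | S N => fun m => Crem A B N m && negb (A N m) end.

Lemma ca_of_cont (nu : subset_N -> R) : additive nu ->
  (forall C, decr_to_empty C -> Un_cv (fun n => nu (C n)) 0) -> is_ca nu.
Proof.
  intros Hadd Hc A B Hdisj HB.
  set (C := Crem A B).
  assert (HCB : forall N m, C N m = true -> B m = true).
  { induction N; simpl; intros m Hm; auto. apply andb_prop in Hm; destruct Hm; auto. }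
  assert (HCA : forall N m, C N m = true -> forall k, (k < N)%nat -> A k m = false).
  { induction N; simpl; intros m Hm k Hk; [lia|].
    apply andb_prop in Hm; destruct Hm as [H1 H2].
    destruct (Nat.eq_dec k N); [subst; destruct (A N m); auto; discriminate|].
    apply IHN; auto; lia. }
  assert (Hsplit : forall N, nu (C N) = nu (A N) + nu (C (S N))).
  { intros N. rewrite <- Hadd.
    - apply set_ext. intros m.
      change (C (S N) m) with (C N m && negb (A N m)).
      assert (Hin : A N m = true -> forall M, (M <= N)%nat -> C M m = true).
      { intros E. assert (B m = true) by (apply HB; eauto).
        induction M; intros HM; [exact H|].
        change (C (S M) m) with (C M m && negb (A M m)).
        rewrite IHM by lia. simpl. destruct (A M m) eqn:E3; auto.
        rewrite (Hdisj M N m) in E; [discriminate| lia | auto]. }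
      destruct (A N m) eqn:E.
      + rewrite (Hin eq_refl N (le_n _)). reflexivity.
      + destruct (C N m); reflexivity.
    - intros m Hm. change (C (S N) m) with (C N m && negb (A N m)). rewrite Hm. apply andb_false_r. }
  assert (Htel : forall n, nu B = sum_f_R0 (fun k => nu (A k)) n + nu (C (S n))).
  { induction n; simpl.
    - rewrite <- Hsplit. reflexivity.
    - rewrite IHn, (Hsplit (S n)). simpl. ring. }
  assert (Hd : decr_to_empty C).
  { split.
    - intros n m Hm. change (C (S n) m) with (C n m && negb (A n m)) in Hm. apply andb_prop in Hm; tauto.
    - intros m. destruct (B m) eqn:Bm.
      + destruct (proj1 (HB m) Bm) as [k Hk]. exists (S k). change (C (S k) m) with (C k m && negb (A k m)).
        rewrite Hk. apply andb_false_r.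
      + exists O. exact Bm. }
  specialize (Hc C Hd).
  intros eps Heps. destruct (Hc eps Heps) as [N HN]. exists N. intros n Hn.
  unfold R_dist. rewrite (Htel n).
  specialize (HN (S n) ltac:(lia)). unfold R_dist in HN.
  replace (sum_f_R0 (fun k => nu (A k)) n - (sum_f_R0 (fun k => nu (A k)) n + nu (C (S n))))
    with (- (nu (C (S n)) - 0)) by ring.
  rewrite Rabs_Ropp. exact HN.
Qed.

Lemma decr_mono (C : nat -> subset_N) : (forall n m, C (S n) m = true -> C n m = true) ->
  forall i j m, (i <= j)%nat -> C j m = true -> C i m = true.
Proof. intros H i j m Hij. induction Hij; auto. Qed.

Lemma ca_decr (nu : subset_N -> R) : additive nu -> is_ca nu ->
  forall C, decr_to_empty C -> Un_cv (fun n => nu (C n)) 0.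
Proof.
  intros Hadd Hca C [Hdec Hemp].
  set (A := fun k m => C k m && negb (C (S k) m)).
  assert (Hsum : infinite_sum (fun k => nu (A k)) (nu (C O))).
  { apply Hca.
    - intros i j n Hij Hi. unfold A in *. apply andb_prop in Hi as [Hi1 Hi2].
      destruct (C j n) eqn:Cj; simpl; auto.
      destruct (proj1 (Nat.lt_gt_cases i j) Hij) as [Hlt|Hlt].
      + assert (C (S i) n = true) by (apply (decr_mono C Hdec (S i) j n); auto).
        rewrite H in Hi2; discriminate.
      + assert (C (S j) n = true) by (apply (decr_mono C Hdec (S j) i n); auto).
        rewrite H. reflexivity.
    - intros n. split.
      + intros H0. destruct (Hemp n) as [N HN].
        assert (forall N, C N n = false -> exists k, A k n = true).
        { induction N0; intros HN0; [congruence|].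
          destruct (C N0 n) eqn:E; [|auto].
          exists N0. unfold A. rewrite E, HN0. reflexivity. }
        eauto.
      + intros [k Hk]. unfold A in Hk. apply andb_prop in Hk as [Hk _].
        apply (decr_mono C Hdec 0 k n); auto; lia. }
  assert (Htel : forall n, nu (C O) = sum_f_R0 (fun k => nu (A k)) n + nu (C (S n))).
  { assert (Hs : forall k, nu (C k) = nu (A k) + nu (C (S k))).
    { intros k. rewrite <- Hadd.
      - apply set_ext. intros m. unfold A.
        destruct (C (S k) m) eqn:E.
        + rewrite (Hdec k m E). reflexivity.
        + destruct (C k m); reflexivity.
      - intros m Hm. unfold A in Hm. apply andb_prop in Hm as [_ Hm].
        destruct (C (S k) m); auto. }
    induction n; simpl.
    - apply Hs.
    - rewrite IHn, (Hs (S n)). ring. }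
  intros eps Heps. destruct (Hsum eps Heps) as [N HN]. exists (S N). intros n Hn.
  destruct n as [|n]; [lia|].
  specialize (HN n ltac:(lia)). unfold R_dist in *.
  rewrite (Htel n) in HN.
  replace (nu (C (S n)) - 0) with (- (sum_f_R0 (fun k => nu (A k)) n -
     (sum_f_R0 (fun k => nu (A k)) n + nu (C (S n))))) by ring.
  rewrite Rabs_Ropp. exact HN.
Qed.

Section Meas.
Variable phi : seqR -> R.
Hypothesis Hphi : linf_dual phi.

Let mu := ba_of phi.
Let w k := mu (singleton k).

Lemma phi_zero : phi (fun _ => 0) = 0.
Proof.
  transitivity (phi (fun k => 0 * indic (fun _ => false) k)).
  - apply phi_ext; intros; ring.
  - rewrite phi_scal; auto using bounded_indic. ring.
Qed.

Lemma mu_empty : mu (fun _ => false) = 0.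
Proof. unfold mu, ba_of. rewrite <- phi_zero. apply phi_ext. reflexivity. Qed.

Lemma mu_additive : additive mu.
Proof.
  intros D1 D2 Hd. unfold mu, ba_of. rewrite <- phi_add; auto using bounded_indic.
  apply phi_ext. intros k. unfold indic.
  destruct (D1 k) eqn:E1; simpl.
  - rewrite (Hd k E1). ring.
  - destruct (D2 k); ring.
Qed.

Hypothesis Hca : is_ca mu.

Lemma mu_series (D : subset_N) :
  infinite_sum (fun k => if D k then w k else 0) (mu D).
Proof.
  assert (H : infinite_sum (fun k => mu (fun n => D k && Nat.eqb n k)) (mu D)).
  { apply Hca.
    - intros i j n Hij Hi. apply andb_prop in Hi as [_ Hi].
      apply Nat.eqb_eq in Hi. subst. destruct (D j); simpl; auto.
      apply Nat.eqb_neq. auto.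
    - intros n. split.
      + intros Hn. exists n. rewrite Hn, Nat.eqb_refl. reflexivity.
      + intros [k Hk]. apply andb_prop in Hk as [H1 H2].
        apply Nat.eqb_eq in H2. subst. auto. }
  intros eps Heps. destruct (H eps Heps) as [N HN]. exists N. intros n Hn.
  specialize (HN n Hn).
  replace (sum_f_R0 (fun k => if D k then w k else 0) n)
    with (sum_f_R0 (fun k => mu (fun n => D k && Nat.eqb n k)) n); auto.
  apply sum_eq. intros k _. destruct (D k).
  - reflexivity.
  - apply mu_empty.
Qed.

Lemma mu_pos (D : subset_N) : (forall k, D k = true -> 0 <= w k) -> 0 <= mu D.
Proof.
  intros H. apply (Rlim_nonneg _ _ (mu_series D)).
  intros k. destruct (D k) eqn:E; auto. lra.
Qed.

Lemma mu_neg (D : subset_N) : (forall k, D k = true -> w k <= 0) -> mu D <= 0.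
Proof.
  intros H. apply (Rlim_nonpos _ _ (mu_series D)).
  intros k. destruct (D k) eqn:E; auto. lra.
Qed.

Definition Pw k := if Rle_dec 0 (w k) then true else false.
Definition TP K m := Nat.leb K m && Pw m.
Definition TN K m := Nat.leb K m && negb (Pw m).
Definition rK K := mu (TP K) - mu (TN K).

Lemma tail_bound (D : subset_N) K : (forall m, D m = true -> (K <= m)%nat) ->
  Rabs (mu D) <= rK K.
Proof.
  intros HD. unfold rK.
  assert (E1 : mu D = mu (fun m => D m && Pw m) + mu (fun m => D m && negb (Pw m))).
  { rewrite <- mu_additive.
    - apply set_ext. intros m. destruct (D m), (Pw m); reflexivity.
    - intros m. destruct (D m), (Pw m); simpl; auto. }
  assert (E2 : mu (TP K) = mu (fun m => D m && Pw m) + mu (fun m => TP K m && negb (D m))).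
  { rewrite <- mu_additive.
    - apply set_ext. intros m. unfold TP.
      destruct (D m) eqn:Dm.
      + assert (HK := HD m Dm). apply Nat.leb_le in HK. rewrite HK.
        destruct (Pw m); reflexivity.
      + destruct (Nat.leb K m), (Pw m); reflexivity.
    - intros m H. apply andb_prop in H as [H _]. rewrite H. apply andb_false_r. }
  assert (E3 : mu (TN K) = mu (fun m => D m && negb (Pw m)) + mu (fun m => TN K m && negb (D m))).
  { rewrite <- mu_additive.
    - apply set_ext. intros m. unfold TN.
      destruct (D m) eqn:Dm.
      + assert (HK := HD m Dm). apply Nat.leb_le in HK. rewrite HK.
        destruct (Pw m); reflexivity.
      + destruct (Nat.leb K m), (Pw m); reflexivity.
    - intros m H. apply andb_prop in H as [H _]. rewrite H. apply andb_false_r. }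
  assert (Hp : forall Q : subset_N, (forall m, Q m = true -> Pw m = true) -> 0 <= mu Q).
  { intros Q HQ. apply mu_pos. intros k Hk. specialize (HQ k Hk). unfold Pw in HQ.
    destruct (Rle_dec 0 (w k)); auto; discriminate. }
  assert (Hn : forall Q : subset_N, (forall m, Q m = true -> Pw m = false) -> mu Q <= 0).
  { intros Q HQ. apply mu_neg. intros k Hk. specialize (HQ k Hk). unfold Pw in HQ.
    destruct (Rle_dec 0 (w k)); [discriminate|lra]. }
  assert (a1 : 0 <= mu (fun m => D m && Pw m)).
  { apply Hp. intros m H. apply andb_prop in H; tauto. }
  assert (a2 : 0 <= mu (fun m => TP K m && negb (D m))).
  { apply Hp. intros m H. unfold TP in H. apply andb_prop in H as [H _]. apply andb_prop in H; tauto. }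
  assert (a3 : mu (fun m => D m && negb (Pw m)) <= 0).
  { apply Hn. intros m H. apply andb_prop in H as [_ H]. destruct (Pw m); auto. }
  assert (a4 : mu (fun m => TN K m && negb (D m)) <= 0).
  { apply Hn. intros m H. unfold TN in H. apply andb_prop in H as [H _]. apply andb_prop in H as [_ H].
    destruct (Pw m); auto. }
  rewrite E1, E2, E3. apply Rabs_le. lra.
Qed.

Lemma rK_cv : Un_cv rK 0.
Proof.
  replace 0 with (0 - 0) by ring. unfold rK.
  apply CV_minus; apply (ca_decr mu mu_additive Hca); split.
  - intros n m H. unfold TP in *. apply andb_prop in H as [H1 H2]. rewrite H2.
    apply Nat.leb_le in H1. apply andb_true_intro; split; auto. apply Nat.leb_le; lia.
  - intros m. exists (S m). unfold TP. replace (Nat.leb (S m) m) with false; auto.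
    symmetry; apply Nat.leb_gt; lia.
  - intros n m H. unfold TN in *. apply andb_prop in H as [H1 H2]. rewrite H2.
    apply Nat.leb_le in H1. apply andb_true_intro; split; auto. apply Nat.leb_le; lia.
  - intros m. exists (S m). unfold TN. replace (Nat.leb (S m) m) with false; auto.
    symmetry; apply Nat.leb_gt; lia.
Qed.

End Meas.

Fixpoint fsum (f : nat -> R) (K : nat) : R :=
  match K with O => 0 | S K => fsum f K + f K end.

Fixpoint cnt (h t : R) (j : nat) : R :=
  match j with O => 0 | S j => cnt h t j + (if Rle_dec (INR (S j) * h) t then 1 else 0) end.

Lemma cnt_full h t j : 0 < h -> INR j * h <= t -> cnt h t j = INR j.
Proof.
  intros Hh. induction j; intros H; cbn [cnt]; auto.
  rewrite IHj. 2:{ rewrite S_INR in H. lra. }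
  destruct (Rle_dec (INR (S j) * h) t); [|contradiction]. rewrite S_INR. ring.
Qed.

Lemma cnt_range h t j : 0 <= cnt h t j <= INR j.
Proof.
  induction j; cbn [cnt]; [simpl; lra|]. rewrite S_INR. destruct (Rle_dec _ t); lra.
Qed.

Lemma cnt_bound h t j : 0 < h -> 0 <= t <= INR j * h -> t - h <= h * cnt h t j <= t.
Proof.
  intros Hh. induction j; intros [H1 H2].
  - simpl in *. lra.
  - rewrite S_INR in H2. cbn [cnt].
    destruct (Rle_lt_dec t (INR j * h)) as [Hle|Hlt].
    + destruct (Rle_dec (INR (S j) * h) t) as [Hc|Hc].
      * rewrite S_INR in Hc. lra.
      * specialize (IHj (conj H1 Hle)). lra.
    + rewrite (cnt_full h t j Hh ltac:(lra)).
      destruct (Rle_dec (INR (S j) * h) t) as [Hc|Hc]; rewrite S_INR in Hc; nra.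
Qed.

Lemma cv_const c : Un_cv (fun _ => c) c.
Proof. intros eps He. exists O. intros. unfold R_dist. rewrite Rminus_diag, Rabs_R0. auto. Qed.

Lemma fsum_cv (f : nat -> nat -> R) K : (forall k, Un_cv (fun N => f N k) 0) ->
  Un_cv (fun N => fsum (f N) K) 0.
Proof.
  intros H. induction K; simpl.
  - apply cv_const.
  - replace 0 with (0 + 0) by ring. apply CV_plus; auto.
Qed.

Section Meas2.
Variable phi : seqR -> R.
Hypothesis Hphi : linf_dual phi.

Lemma bounded_head (z : seqR) K : bounded z -> bounded (fun m => if Nat.ltb m K then z m else 0).
Proof.
  intros [M HM]. exists M. intros n. destruct (Nat.ltb n K); auto.
  rewrite Rabs_R0. specialize (HM n). pose proof (Rabs_pos (z n)). lra.
Qed.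

Lemma head_phi (z : seqR) K : bounded z ->
  phi (fun m => if Nat.ltb m K then z m else 0) = fsum (fun k => z k * ba_of phi (singleton k)) K.
Proof.
  intros bz. induction K; simpl.
  - transitivity (phi (fun _ => 0)); [apply phi_ext; intros m; reflexivity| apply phi_zero; auto].
  - rewrite <- IHK. unfold ba_of. rewrite <- (phi_scal phi Hphi); auto using bounded_indic.
    rewrite <- (phi_add phi Hphi); auto using bounded_head, bounded_scal, bounded_indic.
    apply phi_ext. intros m. unfold indic, singleton.
    destruct (Nat.ltb_spec m (S K)), (Nat.ltb_spec m K), (Nat.eqb_spec m K); subst; try lia; ring.
Qed.

Hypothesis Hca : is_ca (ba_of phi).

Lemma tail_phi (z : seqR) M K : bounded z -> 0 < M -> (forall m, 0 <= z m <= M) ->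
  (forall m, (m < K)%nat -> z m = 0) -> Rabs (phi z) <= M * rK phi K.
Proof.
  intros bz HM Hz HK. apply Rle_plus_epsilon. intros eps Heps.
  destruct Hphi as [_ Hc]. destruct (Hc z bz eps Heps) as [delta [Hd Hcont]].
  destruct (archimed_cor1 (delta / M)) as [J [HJ1 HJ2]].
  { apply Rdiv_lt_0_compat; auto. }
  assert (HJ : 0 < INR J) by (apply lt_0_INR; auto).
  set (h := M / INR J).
  assert (Hh : 0 < h) by (apply Rdiv_lt_0_compat; auto).
  assert (Hhd : h < delta).
  { unfold h. unfold Rdiv. apply (Rmult_lt_compat_l M) in HJ1; auto.
    replace (M * (delta / M)) with delta in HJ1 by (field; lra). lra. }
  assert (HJh : INR J * h = M) by (unfold h; field; lra).
  set (L := fun j m => if Rle_dec (INR j * h) (z m) then true else false).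
  set (lev := fun j m => cnt h (z m) j).
  assert (blev : forall j, bounded (lev j)).
  { intros j. exists (INR j). intros m. unfold lev. pose proof (cnt_range h (z m) j).
    rewrite Rabs_pos_eq; lra. }
  assert (C1 : forall j, phi (lev j) = fsum (fun i => ba_of phi (L (S i))) j).
  { induction j; simpl.
    - transitivity (phi (fun _ => 0)); [apply phi_ext; intros m; reflexivity| apply phi_zero; auto].
    - rewrite <- IHj. unfold ba_of. rewrite <- (phi_add phi Hphi); auto using bounded_indic.
      apply phi_ext. intros m. unfold lev, indic, L. simpl.
      destruct (Rle_dec _ (z m)); reflexivity. }
  assert (C2 : forall j, Rabs (fsum (fun i => ba_of phi (L (S i))) j) <= INR j * rK phi K).
  { induction j; cbn [fsum].
    - rewrite Rabs_R0. simpl; lra.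
    - rewrite S_INR. eapply Rle_trans; [apply Rabs_triang|].
      assert (Rabs (ba_of phi (L (S j))) <= rK phi K).
      { apply tail_bound; auto. intros m Hm. unfold L in Hm.
        destruct (Rle_dec _ (z m)) as [r|]; [|discriminate].
        destruct (Compare_dec.le_lt_dec K m); auto. rewrite HK in r by auto.
        assert (0 < INR (S j)) by (apply lt_0_INR; lia). nra. }
      lra. }
  set (s := fun m => h * lev J m).
  assert (bs : bounded s) by (apply bounded_scal; auto).
  assert (Hzs : forall n, Rabs (z n - s n) <= delta).
  { intros n. unfold s, lev. specialize (Hz n).
    pose proof (cnt_bound h (z n) J Hh ltac:(lra)).
    apply Rabs_le. lra. }
  specialize (Hcont s bs Hzs).
  assert (Hs : Rabs (phi s) <= M * rK phi K).
  { unfold s. rewrite (phi_scal phi Hphi); auto. rewrite Rabs_mult, Rabs_pos_eq by lra.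
    rewrite C1. rewrite <- HJh.
    replace (INR J * h * rK phi K) with (h * (INR J * rK phi K)) by ring.
    apply Rmult_le_compat_l; [lra| apply C2]. }
  pose proof (Rabs_triang_inv (phi z) (phi s)). lra.
Qed.
End Meas2.

Lemma dct (phi : seqR -> R) (Hphi : linf_dual phi) (Hca : is_ca (ba_of phi))
  (y : nat -> seqR) M : (forall N, bounded (y N)) -> (forall N m, 0 <= y N m <= M) ->
  (forall m, Un_cv (fun N => y N m) 0) -> Un_cv (fun N => phi (y N)) 0.
Proof.
  intros by_ Hy Hcv eps Heps.
  assert (HM : 0 <= M) by (specialize (Hy O O); lra).
  destruct (rK_cv phi Hphi Hca (eps / (2 * (M + 1)))) as [K HK].
  { apply Rdiv_lt_0_compat; lra. }
  specialize (HK K (le_n _)). unfold R_dist in HK. rewrite Rminus_0_r in HK.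
  apply Rabs_def2 in HK as [HK _].
  assert (Hh : Un_cv (fun N => fsum (fun k => y N k * ba_of phi (singleton k)) K) 0).
  { apply (fsum_cv (fun N k => y N k * ba_of phi (singleton k))). intros k.
    replace 0 with (0 * ba_of phi (singleton k)) by ring.
    apply CV_mult; auto. apply cv_const. }
  destruct (Hh (eps / 2)) as [N0 HN0]; [lra|].
  exists N0. intros N HN. specialize (HN0 N HN). unfold R_dist in *.
  rewrite Rminus_0_r in *.
  set (tl := fun m => if Nat.ltb m K then 0 else y N m).
  assert (E : phi (y N) = phi (fun m => if Nat.ltb m K then y N m else 0) + phi tl).
  { rewrite <- (phi_add phi Hphi).
    - apply phi_ext. intros m. unfold tl. destruct (Nat.ltb m K); ring.
    - apply bounded_head; auto.
    - destruct (by_ N) as [B HB]. exists B. intros n. unfold tl.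
      destruct (Nat.ltb n K); auto. rewrite Rabs_R0.
      specialize (HB n). pose proof (Rabs_pos (y N n)). lra. }
  assert (Ht : Rabs (phi tl) <= (M + 1) * rK phi K).
  { apply tail_phi; auto.
    - destruct (by_ N) as [B HB]. exists B. intros n. unfold tl.
      destruct (Nat.ltb n K); auto. rewrite Rabs_R0.
      specialize (HB n). pose proof (Rabs_pos (y N n)). lra.
    - lra.
    - intros m. unfold tl. destruct (Nat.ltb m K); specialize (Hy N m); lra.
    - intros m Hm. unfold tl. apply Nat.ltb_lt in Hm. rewrite Hm. reflexivity. }
  rewrite E, (head_phi phi Hphi) by auto.
  assert ((M + 1) * rK phi K < eps / 2).
  { apply (Rmult_lt_compat_l (M + 1)) in HK; [|lra].
    replace ((M + 1) * (eps / (2 * (M + 1)))) with (eps / 2) in HK by (field; lra). lra. }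
  eapply Rle_lt_trans; [apply Rabs_triang|]. lra.
Qed.

Theorem lemma3 (T : seqR -> seqR) :
  cont_pos_linear_op T ->
  (forall A : nat -> subset_N, decr_to_empty A ->
     forall m, Un_cv (fun n => T (indic (A n)) m) 0) ->
  (forall n : nat, exists E : list nat,
     forall m, T (indic (singleton n)) m <> 0 -> In m E) ->
  yosida_hewitt (adjoint T).
Proof.
  intros [Tb [Tl [_ Tp]]] Hi Hii. split.
  - intros phi Hphi Hca.
    apply ca_of_cont.
    + intros D1 D2 Hd. unfold ba_of, adjoint.
      rewrite <- (phi_add phi Hphi); auto using bounded_indic.
      rewrite <- (T_add T Tl); auto using bounded_indic.
      apply phi_ext. intros n. f_equal. apply functional_extensionality. intros k.
      unfold indic. destruct (D1 k) eqn:E1; simpl.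
      * rewrite (Hd k E1). ring.
      * destruct (D2 k); ring.
    + intros C HC. unfold ba_of, adjoint.
      destruct (Tb _ (bounded_indic (C O))) as [M0 HM0].
      apply (dct phi Hphi Hca (fun N => T (indic (C N))) M0).
      * intros N. apply Tb, bounded_indic.
      * intros N m. split.
        -- apply Tp; auto using bounded_indic. intros k; unfold indic; destruct (C N k); lra.
        -- assert (0 <= T (indic (C O)) m - T (indic (C N)) m).
           { assert (Hs := T_sub T Tl _ _ (bounded_indic (C O)) (bounded_indic (C N))).
             replace (T (indic (C O)) m - T (indic (C N)) m)
               with (T (fun k => indic (C O) k - indic (C N) k) m) by (rewrite Hs; reflexivity).
             apply Tp.
             - exists 2. intros k. unfold indic. apply Rabs_le.
               destruct (C O k), (C N k); lra.
             - intros k. unfold indic. destruct (C N k) eqn:E.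
               + rewrite (decr_mono C (proj1 HC) O N k ltac:(lia) E). lra.
               + destruct (C O k); lra. }
           specialize (HM0 m). pose proof (Rle_abs (T (indic (C O)) m)). lra.
      * intros m. apply Hi. auto.
  - intros phi Hphi Hpa n. unfold ba_of, adjoint.
    destruct (Hii n) as [E HE].
    set (z := T (indic (singleton n))).
    assert (bz : bounded z) by (apply Tb, bounded_indic).
    set (K := S (list_max E)).
    transitivity (phi (fun m => if Nat.ltb m K then z m else 0)).
    + apply phi_ext. intros m. destruct (Nat.ltb_spec m K); auto.
      destruct (Req_dec (z m) 0); auto. exfalso.
      specialize (HE m H0).
      assert (list_max E <= list_max E)%nat by lia.
      apply list_max_le in H1. rewrite Forall_forall in H1. specialize (H1 m HE). unfold K in H. lia.
    + rewrite (head_phi phi Hphi) by auto.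
      generalize K; intros K0. induction K0; simpl; auto. rewrite IHK0. unfold is_pa, ba_of in Hpa.
      unfold ba_of; rewrite Hpa. ring.
Qed.
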